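(* Let $R$ be a GCD-domain. Let $0\leqslant n\leqslant m$, $s_0,s_1,\dots,s_n\in\operatorname{Sqf} R$ and $t_0,t_1,\dots,t_m\in\operatorname{Sqf} R$. If $$s_n^{2^n}s_{n-1}^{2^{n-1}}\cdots s_1^2s_0=t_m^{2^m}t_{m-1}^{2^{m-1}}\cdots t_1^2t_0,$$ then $s_i\sim t_i$ for $i=0,\dots,n$, and, if $m>n$, then $t_i\in R^{\ast}$ for $i=n+1,\dots,m$.
   Context: A GCD-domain is a commutative ring with identity without zero divisors in which the intersection of any two principal ideals is principal. $R^{\ast}$ denotes the set of invertible elements of $R$; $a\sim b$ means $a$ and $b$ are associated. An element $a\in R$ is square-free if it cannot be written as $a=b^2c$ with $b\in R\setminus R^{\ast}$ and $c\in R$; $\operatorname{Sqf} R$ denotes the set of square-free elements of $R$. *)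

(* Defs.v *)
From HB Require Import structures.
From mathcomp Require Import all_boot all_order all_algebra.
Set Implicit Arguments. Unset Strict Implicit. Unset Printing Implicit Defensive.
Import GRing.Theory.
Local Open Scope ring_scope.

Definition rdvd (R : comRingType) (a x : R) : Prop := exists k : R, x = k * a.

Definition associated (R : comRingType) (a b : R) : Prop := rdvd a b /\ rdvd b a.

Definition GCD_domain (R : idomainType) : Prop :=
  forall a b : R, exists c : R,
    forall x : R, (rdvd a x /\ rdvd b x) <-> rdvd c x.

Definition square_free (R : comUnitRingType) (a : R) : Prop :=
  ~ (exists b c : R, b \isn't a GRing.unit /\ a = b ^+ 2 * c).

(* Main.v *)
Require Import Defs.
From HB Require Import structures.
From mathcomp Require Import all_boot all_order all_algebra.
From mathcomp Require Import ring.
Import GRing.Theory.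
Local Open Scope ring_scope.

Set Implicit Arguments. Unset Strict Implicit.
Section Aux.
Variable R : idomainType.
Hypothesis hR : GCD_domain R.

Definition cop (x y : R) := forall e : R, rdvd e x -> rdvd e y -> e \is a GRing.unit.

Lemma sqf_neq0 (a : R) : square_free a -> a != 0.
Proof.
move=> h; apply/eqP => a0; apply: h; exists 0, 0; split.
  by rewrite unitr0.
by rewrite a0 mulr0.
Qed.

Lemma sqf_unit (u a : R) : u \is a GRing.unit -> square_free a -> square_free (u * a).
Proof.
move=> uu h [b [c [nb E]]]; apply: h; exists b, (u^-1 * c); split => //.
by rewrite -[a](mulKr uu) E; ring.
Qed.

Lemma euclid (x y z : R) : x != 0 -> y != 0 -> cop x y -> rdvd x (y * z) -> rdvd x z.
Proof.
move=> x0 y0 cxy [h Eh].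
have [l Hl] := hR x y.
have [[k1 E1] [k2 E2]] : rdvd x l /\ rdvd y l by apply/Hl; exists 1; rewrite mul1r.
have [g Eg] : rdvd l (x * y).
  by apply/Hl; split; [exists y; rewrite mulrC | exists x].
have gx : rdvd g x.
  exists k2; apply: (mulIf y0); rewrite Eg E2; ring.
have gy : rdvd g y.
  exists k1; apply: (mulIf x0); rewrite mulrC Eg E1; ring.
have gu := cxy g gx gy.
have [w Ew] : rdvd l (y * z).
  by apply/Hl; split; [exists h | exists z; rewrite mulrC].
have Hinv : g^-1 * (x * y) = l by rewrite Eg mulKr.
exists (w * g^-1); apply: (mulIf y0).
transitivity (w * (g^-1 * (x * y))); last by ring.
by rewrite Hinv -Ew mulrC.
Qed.

Lemma euclid2 (x y z : R) : x != 0 -> y != 0 -> cop x y -> rdvd x (y ^+ 2 * z) -> rdvd x z.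
Proof.
move=> x0 y0 c H; apply: (@euclid x y z x0 y0 c); apply: (@euclid x y (y * z) x0 y0 c).
by move: H; rewrite expr2 mulrA.
Qed.

Lemma gcd_decomp (x y : R) : x != 0 -> y != 0 ->
  exists d x' y', x = d * x' /\ y = d * y' /\ cop x' y'.
Proof.
move=> x0 y0.
have [l Hl] := hR x y.
have [[k1 E1] [k2 E2]] : rdvd x l /\ rdvd y l by apply/Hl; exists 1; rewrite mul1r.
have [g Eg] : rdvd l (x * y).
  by apply/Hl; split; [exists y; rewrite mulrC | exists x].
have Ex : x = g * k2.
  apply: (mulIf y0); rewrite Eg E2; ring.
have Ey : y = g * k1.
  apply: (mulIf x0); rewrite mulrC Eg E1; ring.
have l0 : l != 0.
  apply/eqP => l0; move: Eg; rewrite l0 mulr0 => /eqP; by rewrite mulf_eq0 (negbTE x0) (negbTE y0).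
exists g, k2, k1; split => //; split => //.
move=> e [a Ea] [b Eb].
have [w Ew] : rdvd l (x * b).
  apply/Hl; split; first by exists b; rewrite mulrC.
  exists a; rewrite Ex Ey Ea Eb; ring.
have : (e * w) * l = 1 * l.
  rewrite mul1r -mulrA -Ew E1 Eb; ring.
move/(mulIf l0) => ew; apply/unitrP; exists w; split => //; by rewrite mulrC.
Qed.

Lemma unit_side (a b x y : R) : square_free b -> x != 0 -> y != 0 -> cop x y ->
  a * x ^+ 2 = b * y ^+ 2 -> x \is a GRing.unit.
Proof.
move=> hb x0 y0 c E.
have [b1 Eb1] : rdvd x b.
  apply: (@euclid2 x y b x0 y0 c); exists (a * x); rewrite mulrC -E; ring.
have : (a * x) * x = (b1 * y ^+ 2) * x by rewrite -mulrA -expr2 E Eb1; ring.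
move/(mulIf x0) => E2.
have [b2 Eb2] : rdvd x b1.
  apply: (@euclid2 x y b1 x0 y0 c); exists a; rewrite mulrC -E2; ring.
apply/negPn/negP => nu; apply: hb; exists x, b2; split => //.
by rewrite Eb1 Eb2; ring.
Qed.

Lemma key (a b x y : R) : square_free a -> square_free b -> x != 0 -> y != 0 ->
  a * x ^+ 2 = b * y ^+ 2 ->
  associated a b /\ exists v, v \is a GRing.unit /\ y = v * x.
Proof.
move=> ha hb x0 y0 E.
have [d [x' [y' [Ex [Ey c]]]]] := gcd_decomp x0 y0.
have d0 : d != 0 by apply: contraNneq x0 => e0; rewrite Ex e0 mul0r.
have x'0 : x' != 0 by apply: contraNneq x0 => e0; rewrite Ex e0 mulr0.
have y'0 : y' != 0 by apply: contraNneq y0 => e0; rewrite Ey e0 mulr0.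
have d20 : d ^+ 2 != 0 by rewrite expf_neq0.
have E' : a * x' ^+ 2 = b * y' ^+ 2.
  apply: (mulIf d20); transitivity (a * x ^+ 2); first by rewrite Ex; ring.
  by rewrite E Ey; ring.
have ux : x' \is a GRing.unit := unit_side hb x'0 y'0 c E'.
have c' : cop y' x' by move=> e h1 h2; apply: c.
have uy : y' \is a GRing.unit := unit_side ha y'0 x'0 c' (esym E').
have ux2 : x' ^+ 2 \is a GRing.unit by rewrite unitrX.
have uy2 : y' ^+ 2 \is a GRing.unit by rewrite unitrX.
split; first split.
- exists (x' ^+ 2 * (y' ^+ 2)^-1).
  rewrite -[b](mulrK uy2) -E'; ring.
- exists (y' ^+ 2 * (x' ^+ 2)^-1).
  rewrite -[a](mulrK ux2) E'; ring.
exists (x'^-1 * y'); split; first by rewrite unitrM unitrV ux uy.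
transitivity (d * y' * (x'^-1 * x')); first by rewrite mulVr // mulr1 Ey.
by rewrite Ex; ring.
Qed.

Lemma peel (n : nat) (s : nat -> R) :
  \prod_(i < n.+1) s i ^+ (2 ^ i) = s 0%N * (\prod_(i < n) s i.+1 ^+ (2 ^ i)) ^+ 2.
Proof.
rewrite big_ord_recl expn0 expr1 -prodrXl; congr (_ * _).
apply: eq_bigr => i _; by rewrite lift0 expnS mulnC exprM.
Qed.

Lemma prod_neq0 (n : nat) (s : nat -> R) : (forall i, (i < n)%N -> s i != 0) ->
  \prod_(i < n) s i ^+ (2 ^ i) != 0.
Proof.
move=> h; apply/prodf_neq0 => i _; by rewrite expf_neq0 // h.
Qed.

Lemma prod_unit (m : nat) (t : nat -> R) :
  \prod_(i < m) t i ^+ (2 ^ i) \is a GRing.unit -> forall j, (j < m)%N -> t j \is a GRing.unit.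
Proof.
move=> U j jm; move: U; rewrite (bigD1 (Ordinal jm)) //= unitrM => /andP [U _].
by move: U; rewrite unitrX_pos // expn_gt0.
Qed.

Lemma assoc_unit (u a b : R) : u \is a GRing.unit -> associated (u * a) b -> associated a b.
Proof.
move=> uu [[k Ek] [k' Ek']]; split.
  by exists (k * u); rewrite Ek mulrA.
exists (u^-1 * k'); by rewrite -[a](mulKr uu) Ek' mulrA.
Qed.

Lemma main (n : nat) : forall (m : nat) (u : R) (s t : nat -> R), (n <= m)%N ->
  u \is a GRing.unit ->
  (forall i : nat, (i <= n)%N -> square_free (s i)) ->
  (forall i : nat, (i <= m)%N -> square_free (t i)) ->
  u * \prod_(i < n.+1) s i ^+ (2 ^ i) = \prod_(i < m.+1) t i ^+ (2 ^ i) ->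
  (forall i : nat, (i <= n)%N -> associated (s i) (t i)) /\
  (forall i : nat, (n < i <= m)%N -> t i \is a GRing.unit).
Proof.
elim: n => [|n IH] m u s t nm uu hs ht E; rewrite !peel mulrA in E.
  have [A [v [vu Ev]]] := key (sqf_unit uu (hs 0%N isT)) (ht 0%N isT)
    (prod_neq0 (fun i (H : (i < 0)%N) => sqf_neq0 (hs i.+1 H)))
    (prod_neq0 (fun i (H : (i < m)%N) => sqf_neq0 (ht i.+1 H))) E.
  split.
    by move=> [|i] // _; apply: assoc_unit uu A.
  move=> [|j] // /andP [_ jm].
  apply: (@prod_unit m (fun i => t i.+1)) => //=.
  by rewrite Ev big_ord0 mulr1.
case: m nm ht E => [//|m] nm ht E.
have [A [v [vu Ev]]] := key (sqf_unit uu (hs 0%N isT)) (ht 0%N isT)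
    (prod_neq0 (fun i (H : (i < n.+1)%N) => sqf_neq0 (hs i.+1 H)))
    (prod_neq0 (fun i (H : (i < m.+1)%N) => sqf_neq0 (ht i.+1 H))) E.
have [IH1 IH2] := IH m v (fun i => s i.+1) (fun i => t i.+1) nm vu
  (fun i H => hs i.+1 H) (fun i H => ht i.+1 H) (esym Ev).
split.
  by move=> [|i] H; [apply: assoc_unit uu A | apply: IH1].
by move=> [|j] // H; apply: IH2.
Qed.

End Aux.

Theorem proposition2 (R : idomainType) (hR : GCD_domain R) (n m : nat)
  (hnm : (n <= m)%N) (s t : nat -> R)
  (hs : forall i : nat, (i <= n)%N -> square_free (s i))
  (ht : forall i : nat, (i <= m)%N -> square_free (t i))
  (heq : \prod_(i < n.+1) s i ^+ (2 ^ i) = \prod_(i < m.+1) t i ^+ (2 ^ i)) :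
  (forall i : nat, (i <= n)%N -> associated (s i) (t i)) /\
  ((n < m)%N -> forall i : nat, (n < i <= m)%N -> t i \is a GRing.unit).
Proof.
have [A B] := main hR hnm (unitr1 R) hs ht (etrans (mul1r _) heq).
by split => // _.
Qed.
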